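(* Let $\chi,a,b,\lambda,\mu$ be positive constants with $b>2\chi\mu$. Let $u_0$ be a bounded, uniformly continuous function on $\mathbb{R}$ with $u_0>0$ on $\mathbb{R}$, $\liminf_{x\to-\infty}u_0(x)>0$, $u_0(x)\to0$ as $x\to+\infty$, and such that for some $\xi_0$, $u_0\in C^2([\xi_0,+\infty))$, $u_0'\le0$ on $[\xi_0,+\infty)$ and $u_0''(x)/u_0(x)\to0$ as $x\to+\infty$. Let $(u,v)$ be the nonnegative classical solution of \[ u_t=u_{xx}-\chi(uv_x)_x+u(a-bu),\quad 0=v_{xx}-\lambda v+\mu u,\quad x\in\mathbb{R},\ t>0,\qquad u(x,0)=u_0(x), \] and let $E_\omega(t)=\{x\in\mathbb{R}:u(x,t)=\omega\}$. For any $\epsilon>0$ and $\gamma_1>0$, if $\zeta(t)$ satisfies $u_0(\zeta(t))=\gamma_1e^{-(a+\epsilon)t}$ for all sufficiently large $t$, then for any $\omega\in(0,a/b)$ there is $T_1\ge0$ such that $E_\omega(t)\subseteq(-\infty,\zeta(t)]$ for all $t\ge T_1$.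
   Context: The solution is the unique nonnegative classical solution with $u\in C([0,\infty),C^b_{\rm unif}(\mathbb{R}))\cap C^1((0,\infty),C^b_{\rm unif}(\mathbb{R}))$ (global and bounded in time since $b>\chi\mu$), where $C^b_{\rm unif}(\mathbb{R})$ is the space of bounded uniformly continuous functions with the sup norm. *)

(* Defs.v *)
From Stdlib Require Import Reals.
From Coquelicot Require Import Coquelicot.
Open Scope R_scope.

Definition bdd_unif_cont (f : R -> R) : Prop :=
  (exists M, forall x, Rabs (f x) <= M) /\
  (forall eps, 0 < eps -> exists delta, 0 < delta /\
     forall x y, Rabs (x - y) < delta -> Rabs (f x - f y) < eps).

Definition d_x (w : R -> R -> R) (x t : R) : R := Derive (fun y => w y t) x.
Definition d_xx (w : R -> R -> R) (x t : R) : R := Derive (fun y => d_x w y t) x.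
Definition d_t (w : R -> R -> R) (x t : R) : R := Derive (fun s => w x s) t.

(* (u, v) is a nonnegative classical solution of
     u_t = u_xx - chi (u v_x)_x + u (a - b u),  0 = v_xx - lambda v + mu u,
     x in R, t > 0, u(x,0) = u0(x),
   with u in C([0,oo), C^b_unif(R)) /\ C^1((0,oo), C^b_unif(R))
   and v(.,t) bounded (the bounded solution of the elliptic equation). *)
Definition classical_solution (chi a b lambda mu : R) (u0 : R -> R)
    (u v : R -> R -> R) : Prop :=
  (forall x, u x 0 = u0 x) /\
  (forall x t, 0 <= t -> 0 <= u x t /\ 0 <= v x t) /\
  (forall t, 0 <= t -> bdd_unif_cont (fun x => u x t)) /\
  (forall t, 0 < t -> exists M, forall x, Rabs (v x t) <= M) /\
  (forall t, 0 <= t -> forall eps, 0 < eps -> exists delta, 0 < delta /\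
     forall s, 0 <= s -> Rabs (s - t) < delta ->
       forall x, Rabs (u x s - u x t) < eps) /\
  (forall t, 0 < t ->
     (forall x, ex_derive (fun s => u x s) t) /\
     bdd_unif_cont (fun x => d_t u x t) /\
     (forall eps, 0 < eps -> exists delta, 0 < delta /\
        forall h, h <> 0 -> Rabs h < delta -> 0 < t + h ->
          forall x, Rabs ((u x (t + h) - u x t) / h - d_t u x t) <= eps) /\
     (forall eps, 0 < eps -> exists delta, 0 < delta /\
        forall s, 0 < s -> Rabs (s - t) < delta ->
          forall x, Rabs (d_t u x s - d_t u x t) < eps)) /\
  (forall x t, 0 < t ->
     ex_derive (fun y => u y t) x /\
     ex_derive (fun y => d_x u y t) x /\
     ex_derive (fun y => v y t) x /\
     ex_derive (fun y => d_x v y t) x /\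
     ex_derive (fun y => u y t * d_x v y t) x /\
     d_t u x t = d_xx u x t
                 - chi * Derive (fun y => u y t * d_x v y t) x
                 + u x t * (a - b * u x t) /\
     0 = d_xx v x t - lambda * v x t + mu * u x t).

Definition level_set (u : R -> R -> R) (omega t : R) : R -> Prop :=
  fun x => u x t = omega.

(* Main.v *)
Require Import Defs.
From Stdlib Require Import Reals.
From Coquelicot Require Import Coquelicot.
Open Scope R_scope.
From Stdlib Require Import Lra Classical.


Lemma locmax_2 (f f' : R -> R) (x1 r f2 : R) : 0 < r ->
  (forall y, Rabs (y - x1) < r -> is_derive f y (f' y)) ->
  is_derive f' x1 f2 ->
  (forall y, Rabs (y - x1) < r -> f y <= f x1) ->
  f' x1 = 0 /\ f2 <= 0.
Proof.
  intros Hr Hd Hd2 Hm.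
  assert (H1 : f' x1 = 0).
  { assert (Hl : derivable_pt_lim f x1 (f' x1)).
    { apply is_derive_Reals. apply Hd. rewrite Rminus_diag, Rabs_R0; lra. }
    set (pr := exist (fun l => derivable_pt_lim f x1 l) (f' x1) Hl : derivable_pt f x1).
    change (f' x1) with (derive_pt f x1 pr).
    apply (deriv_maximum f (x1 - r) (x1 + r)); try lra.
    intros x Ha Hb. apply Hm. apply Rabs_def1; lra. }
  split; [exact H1|].
  destruct (Rle_or_lt f2 0) as [H|H]; [exact H|exfalso].
  apply is_derive_Reals in Hd2.
  destruct (Hd2 f2 H) as [[d Hdpos] Hdd]. simpl in Hdd.
  set (h := Rmin d r / 2).
  assert (Hh : 0 < h /\ h < d /\ h < r).
  { unfold h. pose proof (Rmin_l d r). pose proof (Rmin_r d r).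
    assert (0 < Rmin d r) by (apply Rmin_pos; lra). lra. }
  destruct (MVT_cor2 f f' x1 (x1 + h)) as [c [Hc1 Hc2]]; [lra| |].
  { intros c Hc. apply is_derive_Reals. apply Hd. apply Rabs_def1; lra. }
  assert (Hpos : f' c > 0).
  { specialize (Hdd (c - x1)).
    replace (x1 + (c - x1)) with c in Hdd by ring.
    rewrite H1 in Hdd.
    assert (Hq : Rabs ((f' c - 0) / (c - x1) - f2) < f2).
    { apply Hdd; [lra|]. rewrite Rabs_right; lra. }
    apply Rabs_def2 in Hq. destruct Hq as [_ Hq].
    assert (0 < (f' c - 0) / (c - x1)) by lra.
    assert (Hcx : 0 < c - x1) by lra.
    replace (f' c) with ((f' c - 0) / (c - x1) * (c - x1)) by (field; lra).
    apply Rmult_lt_0_compat; lra. }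
  assert (f (x1 + h) <= f x1) by (apply Hm; apply Rabs_def1; lra).
  assert (0 < f' c * (x1 + h - x1)) by (apply Rmult_lt_0_compat; lra).
  lra.
Qed.

Lemma deriv_neg_before (g : R -> R) (t l : R) : 0 < t -> is_derive g t l -> l < 0 ->
  exists s, 0 <= s < t /\ g s > g t.
Proof.
  intros Ht Hd Hl. apply is_derive_Reals in Hd.
  destruct (Hd (- l) ltac:(lra)) as [[d Hdpos] Hdd]. simpl in Hdd.
  set (h := Rmin d t / 2).
  assert (Hh : 0 < h /\ h < d /\ h < t).
  { unfold h. pose proof (Rmin_l d t). pose proof (Rmin_r d t).
    assert (0 < Rmin d t) by (apply Rmin_pos; lra). lra. }
  exists (t - h). split; [lra|].
  specialize (Hdd (- h)). replace (t + - h) with (t - h) in Hdd by ring.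
  assert (Hq : Rabs ((g (t - h) - g t) / - h - l) < - l).
  { apply Hdd; [lra|]. rewrite Rabs_left; lra. }
  apply Rabs_def2 in Hq. destruct Hq as [Hq _].
  assert (Hq2 : (g (t - h) - g t) / - h < 0) by lra.
  assert (g (t - h) - g t = - ((g (t - h) - g t) / - h) * h) by (field; lra).
  assert (0 < - ((g (t - h) - g t) / - h) * h) by (apply Rmult_lt_0_compat; lra).
  lra.
Qed.

Lemma noninc_from (f f' : R -> R) (a : R) :
  (forall x, a <= x -> is_derive f x (f' x)) -> (forall x, a <= x -> f' x <= 0) ->
  forall x y, a <= x -> x <= y -> f y <= f x.
Proof.
  intros Hd Hn x y Hx Hxy. destruct (Req_dec x y) as [->|Hne]; [lra|].
  destruct (MVT_cor2 f f' x y) as [c [Hc1 Hc2]]; [lra| |].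
  { intros c Hc. apply is_derive_Reals. apply Hd. lra. }
  assert (f' c * (y - x) <= 0).
  { apply Rmult_le_0_r; [apply Hn; lra| lra]. }
  lra.
Qed.

Lemma maxp (Z : R -> R -> R) (T lo hi : R) :
  lo < hi -> 0 <= T ->
  (forall t, 0 <= t <= T -> forall x, lo <= x <= hi -> continuity_pt (fun y => Z y t) x) ->
  (forall t, 0 <= t <= T -> Z lo t < 0 /\ Z hi t < 0) ->
  (forall x, lo <= x <= hi -> Z x 0 < 0) ->
  (forall t, 0 <= t <= T -> forall e, 0 < e -> exists d, 0 < d /\
     forall s, 0 <= s <= T -> Rabs (s - t) < d -> forall x, lo <= x <= hi -> Rabs (Z x s - Z x t) < e) ->
  (forall t x, 0 < t <= T -> lo < x < hi -> Z x t = 0 ->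
     (forall y, lo <= y <= hi -> Z y t <= 0) -> exists s, 0 <= s < t /\ Z x s > 0) ->
  forall t x, 0 <= t <= T -> lo <= x <= hi -> Z x t < 0.
Proof.
  intros Hlh HT Hcont Hbd Hinit Htc Hkey t x Ht Hx.
  apply Rnot_le_lt; intro Hbad.
  set (A := fun s => 0 <= s <= T /\ forall s', 0 <= s' <= s -> forall y, lo <= y <= hi -> Z y s' < 0).
  assert (HA0 : A 0).
  { split; [lra|]. intros s' Hs' y Hy. replace s' with 0 by lra. apply Hinit; lra. }
  assert (Hb : bound A). { exists T. intros a [Ha _]. lra. }
  destruct (completeness A Hb (ex_intro _ 0 HA0)) as [c [Hub Hlub]].
  assert (Hc0 : 0 <= c) by (apply Hub; exact HA0).
  assert (HcT : c <= T) by (apply Hlub; intros a [Ha _]; lra).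
  assert (H1 : forall s', 0 <= s' < c -> forall y, lo <= y <= hi -> Z y s' < 0).
  { intros s' Hs' y Hy.
    destruct (classic (exists a, A a /\ s' <= a)) as [[a [[_ Ha] Hsa]]|Hn].
    - apply (Ha s'); lra.
    - exfalso. assert (c <= s'); [|lra].
      apply Hlub. intros a Ha. apply Rnot_lt_le. intro Hlt. apply Hn. exists a. split; [exact Ha|lra]. }
  assert (H3 : forall y, lo <= y <= hi -> Z y c <= 0).
  { intros y Hy. destruct (Req_dec c 0) as [Hc|Hc].
    - rewrite Hc. left. apply Hinit; exact Hy.
    - apply Rnot_lt_le; intro Hp.
      destruct (Htc c ltac:(lra) (Z y c) Hp) as [d [Hd Hdd]].
      set (s := c - Rmin d c / 2).
      assert (0 < Rmin d c) by (apply Rmin_pos; lra).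
      pose proof (Rmin_l d c). pose proof (Rmin_r d c).
      assert (Hs : Rabs (Z y s - Z y c) < Z y c).
      { apply Hdd; [unfold s; lra| |exact Hy]. unfold s. rewrite Rabs_left; lra. }
      apply Rabs_def2 in Hs.
      assert (Z y s < 0) by (apply H1; [unfold s; lra|exact Hy]). lra. }
  assert (H4 : exists y, lo <= y <= hi /\ 0 <= Z y c).
  { apply NNPP; intro Hn.
    assert (Hneg : forall y, lo <= y <= hi -> Z y c < 0).
    { intros y Hy. apply Rnot_le_lt. intro. apply Hn. exists y; auto. }
    destruct (continuity_ab_maj (fun y => Z y c) lo hi ltac:(lra) (Hcont c ltac:(lra))) as [xm [Hxm Hxmr]].
    assert (Hm : Z xm c < 0) by (apply Hneg; exact Hxmr).
    destruct (Htc c ltac:(lra) (- Z xm c / 2) ltac:(lra)) as [d [Hd Hdd]].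
    set (c' := Rmin T (c + d / 2)).
    pose proof (Rmin_l T (c + d/2)). pose proof (Rmin_r T (c + d/2)).
    assert (Hc' : A c').
    { split. { unfold c'. split; [apply Rmin_glb; lra|lra]. }
      intros s' Hs' y Hy. destruct (Rlt_or_le s' c) as [Hl|Hl].
      - apply H1; [lra|exact Hy].
      - assert (Hq : Rabs (Z y s' - Z y c) < - Z xm c / 2).
        { apply Hdd; [unfold c' in *; lra| |exact Hy]. rewrite Rabs_right; unfold c' in *; lra. }
        apply Rabs_def2 in Hq. pose proof (Hxm y Hy). simpl in *. lra. }
    assert (c' <= c) by (apply Hub; exact Hc').
    assert (Hc'T : c' = T). { unfold c' in *. destruct (Rle_or_lt T (c + d/2)) as [Hq|Hq].
      - rewrite Rmin_left; lra.
      - rewrite Rmin_right in *; lra. }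
    destruct Hc' as [_ Hc'].
    assert (Z x t < 0) by (apply (Hc' t); [lra|exact Hx]). lra. }
  destruct H4 as [y [Hy Hy0]].
  assert (Hcpos : 0 < c).
  { destruct Hc0 as [Hc0|Hc0]; [exact Hc0|]. rewrite <- Hc0 in Hy0.
    pose proof (Hinit y Hy). lra. }
  destruct (continuity_ab_maj (fun y => Z y c) lo hi ltac:(lra) (Hcont c ltac:(lra))) as [xm [Hxm Hxmr]].
  simpl in Hxm.
  assert (Hz : Z xm c = 0). { pose proof (Hxm y Hy). pose proof (H3 xm Hxmr). lra. }
  destruct (Hbd c ltac:(lra)) as [Hl Hh].
  assert (Hxi : lo < xm < hi).
  { destruct Hxmr as [[Ha|Ha] [Hb'|Hb']]; try (subst; lra); split; auto. }
  destruct (Hkey c xm ltac:(lra) Hxi Hz H3) as [s [Hs Hzs]].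
  pose proof (H1 s Hs xm Hxmr). lra.
Qed.

Lemma bound_on_interval (u : R -> R -> R) (T : R) : 0 <= T ->
  (forall t, 0 <= t -> exists B, forall x, Rabs (u x t) <= B) ->
  (forall t, 0 <= t -> forall eps, 0 < eps -> exists delta, 0 < delta /\
     forall s, 0 <= s -> Rabs (s - t) < delta -> forall x, Rabs (u x s - u x t) < eps) ->
  exists B, forall t x, 0 <= t <= T -> Rabs (u x t) <= B.
Proof.
  intros HT Hb Hc.
  set (A := fun y => 0 <= y <= T /\ exists B, forall s x, 0 <= s <= y -> Rabs (u x s) <= B).
  assert (HA0 : A 0).
  { split; [lra|]. destruct (Hb 0 ltac:(lra)) as [B HB]. exists B.
    intros s x Hs. replace s with 0 by lra. apply HB. }
  assert (Hbd : bound A). { exists T. intros a [Ha _]. lra. }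
  destruct (completeness A Hbd (ex_intro _ 0 HA0)) as [c [Hub Hlub]].
  assert (Hc0 : 0 <= c) by (apply Hub; exact HA0).
  assert (HcT : c <= T) by (apply Hlub; intros a [Ha _]; lra).
  destruct (Hc c Hc0 1 ltac:(lra)) as [d [Hd Hdd]].
  destruct (Hb c Hc0) as [Bc HBc].
  destruct (classic (exists a, A a /\ c - d < a)) as [[a [[Ha [Ba HBa]] Hca]]|Hn].
  2:{ exfalso. assert (c <= c - d); [|lra]. apply Hlub. intros a Ha.
      apply Rnot_lt_le. intro. apply Hn. exists a. split; auto. }
  set (y' := Rmin T (c + d / 2)).
  pose proof (Rmin_l T (c + d/2)). pose proof (Rmin_r T (c + d/2)).
  assert (Hy' : A y').
  { split. { unfold y'. split; [apply Rmin_glb; lra|lra]. }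
    exists (Rmax Ba (Bc + 1)). intros s x Hs.
    destruct (Rle_or_lt s a) as [Hl|Hl].
    - eapply Rle_trans; [apply HBa; lra| apply Rmax_l].
    - eapply Rle_trans; [|apply Rmax_r].
      assert (Hq : Rabs (u x s - u x c) < 1).
      { apply Hdd; [lra|]. apply Rabs_def1; unfold y' in *; lra. }
      pose proof (HBc x).
      pose proof (Rabs_triang (u x s - u x c) (u x c)).
      replace (u x s - u x c + u x c) with (u x s) in * by ring. lra. }
  assert (y' <= c) by (apply Hub; exact Hy').
  assert (Hy'T : y' = T). { unfold y' in *. destruct (Rle_or_lt T (c + d/2)) as [Hq|Hq].
      - rewrite Rmin_left; lra.
      - rewrite Rmin_right in *; lra. }
  destruct Hy' as [_ [B HB]]. exists B. intros t x Ht. apply HB. lra.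
Qed.

Lemma is_derive_sub (f g : R->R) x df dg : is_derive f x df -> is_derive g x dg -> is_derive (fun y => f y - g y) x (df - dg).
Proof. intros. exact (is_derive_minus _ _ _ _ _ H H0). Qed.

Lemma Rabs_le_inv a b : Rabs a <= b -> -b <= a <= b.
Proof. intros; split; [pose proof (Rle_abs (-a)); rewrite Rabs_Ropp in *; lra | pose proof (Rle_abs a); lra]. Qed.

Lemma deriv_cont (f:R->R) x l : is_derive f x l -> continuity_pt f x.
Proof. intros H. apply is_derive_Reals in H. apply derivable_continuous_pt. exists l; exact H. Qed.

Lemma is_derive_cst (c x : R) : is_derive (fun _ => c) x 0.
Proof. auto_derive; auto. Qed.

Lemma cosh_ge (s x : R) : 0 < s -> 1 + s * Rabs x <= exp (s * x) + exp (- s * x).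
Proof.
  intros Hs. pose proof (exp_pos (s*x)). pose proof (exp_pos (-s*x)).
  destruct (Rle_or_lt 0 x).
  - rewrite Rabs_right by lra. pose proof (exp_ineq1_le (s*x)). lra.
  - rewrite Rabs_left by lra. pose proof (exp_ineq1_le (-s*x)). nra.
Qed.

Lemma elliptic_bound (w f w' w'' : R -> R) (lam mu B V : R) :
  0 < lam -> 0 < mu -> (forall x, Rabs (w x) <= V) ->
  (forall x, is_derive w x (w' x)) -> (forall x, is_derive w' x (w'' x)) ->
  (forall x, w'' x = lam * w x - mu * f x) -> (forall x, f x <= B) ->
  forall x, w x <= mu * B / lam.
Proof.
  intros Hl Hm HV Hd1 Hd2 Heq Hf x0.
  apply Rnot_lt_le; intro Hbad.
  set (s := Rmin 1 (lam / 2)).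
  assert (Hs : 0 < s /\ s <= 1 /\ s <= lam / 2).
  { unfold s. split; [apply Rmin_pos; lra|]. split; [apply Rmin_l|apply Rmin_r]. }
  set (phi := fun y => exp (s * y) + exp (- s * y)).
  set (phi' := fun y => s * exp (s * y) - s * exp (- s * y)).
  assert (Hphi : forall y, is_derive phi y (phi' y)).
  { intro y. unfold phi, phi'. auto_derive; [exact I|ring]. }
  assert (Hphi' : forall y, is_derive phi' y (s * s * phi y)).
  { intro y. unfold phi, phi'. auto_derive; [exact I|ring]. }
  assert (Hphipos : forall y, 0 < phi y).
  { intro y. unfold phi. pose proof (exp_pos (s*y)). pose proof (exp_pos (-s*y)). lra. }
  set (c := mu * B / lam).
  set (dl := (w x0 - c) / (2 * phi x0)).
  assert (Hdl : 0 < dl).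
  { unfold dl. apply Rdiv_lt_0_compat. { unfold c. lra. } pose proof (Hphipos x0); lra. }
  set (Z := fun y => w y - c - dl * phi y).
  assert (HZ0 : 0 < Z x0).
  { unfold Z, dl. pose proof (Hphipos x0). field_simplify; [|lra].
    apply Rdiv_lt_0_compat; unfold c in *; lra. }
  set (R0 := (V + Rabs c) / (dl * s) + Rabs x0 + 1).
  assert (HVpos : 0 <= V) by (pose proof (HV 0); pose proof (Rabs_pos (w 0)); lra).
  assert (HR0 : Rabs x0 < R0).
  { unfold R0. assert (0 <= (V + Rabs c) / (dl * s)).
    { apply Rdiv_le_0_compat; [pose proof (Rabs_pos c); lra| apply Rmult_lt_0_compat; lra]. }
    lra. }
  assert (Hfar : forall y, R0 <= Rabs y -> Z y < 0).
  { intros y Hy. unfold Z.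
    pose proof (cosh_ge s y ltac:(lra)). fold (phi y) in H.
    pose proof (HV y). apply Rabs_le_inv in H0.
    pose proof (Rabs_pos c) as H2. pose proof (Rle_abs (-c)) as H3. rewrite Rabs_Ropp in H3. pose proof (Rle_abs c).
    assert (H4 : dl + dl * s * Rabs y <= dl * phi y).
    { replace (dl + dl * s * Rabs y) with (dl * (1 + s * Rabs y)) by ring. apply Rmult_le_compat_l; lra. }
    assert (Hk : V + Rabs c < dl * s * Rabs y).
    { assert ((V + Rabs c) / (dl * s) < Rabs y) by (unfold R0 in Hy; pose proof (Rabs_pos x0); lra).
      assert (0 < dl * s) by (apply Rmult_lt_0_compat; lra).
      apply (Rmult_lt_compat_l (dl * s)) in H5; [|lra].
      field_simplify in H5; [|lra]. lra. }
    lra. }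
  assert (HR0p : 0 < R0) by (pose proof (Rabs_pos x0); lra).
  destruct (continuity_ab_maj Z (- R0) R0 ltac:(lra)) as [xm [Hxm Hxmr]].
  { intros y Hy. unfold Z. apply continuity_pt_minus; [apply continuity_pt_minus|].
    - apply (deriv_cont _ _ _ (Hd1 y)).
    - apply continuity_pt_const. intros a b; reflexivity.
    - apply continuity_pt_scal. apply (deriv_cont _ _ _ (Hphi y)). }
  assert (Hx0r : - R0 <= x0 <= R0) by (apply Rabs_def2 in HR0; lra).
  assert (HZm : 0 < Z xm) by (pose proof (Hxm x0 Hx0r); lra).
  assert (Hint : Rabs xm < R0).
  { apply Rnot_le_lt; intro H. pose proof (Hfar xm H). lra. }
  set (r := R0 - Rabs xm).
  destruct (locmax_2 Z (fun y => w' y - dl * phi' y) xm r (w'' xm - dl * (s * s * phi xm))) as [_ H2].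
  - unfold r; lra.
  - intros y _. apply is_derive_sub; [|apply is_derive_scal; apply Hphi].
    replace (w' y) with (w' y - 0) by ring.
    apply is_derive_sub; [apply Hd1|apply is_derive_cst].
  - apply is_derive_sub; [apply Hd2|]. apply is_derive_scal. apply Hphi'.
  - intros y Hy. apply Hxm. unfold r in Hy.
    assert (H1 : Rabs y < R0).
    { pose proof (Rabs_triang (y - xm) xm) as Ht. replace (y - xm + xm) with y in Ht by ring. lra. }
    apply Rabs_def2 in H1. lra.
  - rewrite Heq in H2. pose proof (Hf xm). pose proof (Hphipos xm).
    unfold Z in HZm.
    assert (s * s <= s) by nra.
    assert (lam * c = mu * B) by (unfold c; field; lra).
    assert (0 < lam * (w xm - c - dl * phi xm)) by (apply Rmult_lt_0_compat; lra).
    assert (0 < dl * phi xm * (lam - s * s)) by (apply Rmult_lt_0_compat; [apply Rmult_lt_0_compat|]; lra).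
    assert (0 <= mu * (B - f xm)) by (apply Rmult_le_pos; lra).
    lra.
Qed.

Lemma landau (w w' w'' : R -> R) (V W : R) :
  (forall x, Rabs (w x) <= V) -> (forall x, is_derive w x (w' x)) ->
  (forall x, is_derive w' x (w'' x)) -> (forall x, Rabs (w'' x) <= W) ->
  forall x, Rabs (w' x) <= 2 * V + W.
Proof.
  intros HV H1 H2 HW x.
  destruct (MVT_cor2 w w' x (x + 1)) as [c [Hc1 Hc2]]; [lra| |].
  { intros c _. apply is_derive_Reals, H1. }
  destruct (MVT_cor2 w' w'' x c) as [d [Hd1 Hd2]]; [lra| |].
  { intros d _. apply is_derive_Reals, H2. }
  replace (x + 1 - x) with 1 in Hc1 by ring.
  pose proof (HV x) as Ha. pose proof (HV (x+1)) as Hb.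
  apply Rabs_le_inv in Ha. apply Rabs_le_inv in Hb.
  pose proof (HW d) as Hw. apply Rabs_le_inv in Hw.
  assert (HWp : 0 <= W) by (pose proof (Rabs_pos (w'' d)); lra).
  assert (Hq : - W <= w'' d * (c - x) <= W).
  { split; nra. }
  apply Rabs_le. lra.
Qed.

Lemma ratio_small (f f' f'' : R -> R) (x0 kap : R) : 0 < kap ->
  (forall x, x0 <= x -> is_derive f x (f' x)) ->
  (forall x, x0 <= x -> is_derive f' x (f'' x)) ->
  (forall x, x0 <= x -> f'' x <= kap * kap * f x) ->
  (forall x, 0 < f x) -> forall x, x0 <= x -> - kap * f x <= f' x.
Proof.
  intros Hk Hd1 Hd2 Hf2 Hpos x1 Hx1.
  apply Rnot_lt_le; intro Hbad.
  set (y := fun x => f' x + kap * f x).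
  assert (Hy1 : y x1 < 0) by (unfold y; lra).
  set (g := fun x => y x * exp (- kap * x)).
  set (g' := fun x => (f'' x + kap * f' x - kap * y x) * exp (- kap * x)).
  assert (Hg : forall x, x1 <= x -> is_derive g x (g' x)).
  { intros x Hx. unfold g, g', y.
    assert (Ha := Hd1 x ltac:(lra)). assert (Hb := Hd2 x ltac:(lra)).
    auto_derive.
    - split; [eexists; exact Hb|split; [eexists; exact Ha|exact I]].
    - replace (Derive (fun x => f' x) x) with (f'' x) by (symmetry; apply is_derive_unique; exact Hb). replace (Derive (fun x => f x) x) with (f' x) by (symmetry; apply is_derive_unique; exact Ha). ring. }
  assert (Hgn : forall x, x1 <= x -> g' x <= 0).
  { intros x Hx. unfold g'. apply Rmult_le_0_r; [|left; apply exp_pos].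
    pose proof (Hf2 x ltac:(lra)). unfold y. nra. }
  assert (Hyx : forall x, x1 <= x -> y x <= y x1).
  { intros x Hx. pose proof (noninc_from g g' x1 Hg Hgn x1 x ltac:(lra) Hx) as H.
    unfold g in H.
    assert (He : exp (- kap * x1) = exp (- kap * x) * exp (kap * (x - x1))).
    { rewrite <- exp_plus. f_equal. ring. }
    rewrite He in H.
    assert (H1 : 1 <= exp (kap * (x - x1))).
    { pose proof (exp_ineq1_le (kap * (x - x1))). nra. }
    pose proof (exp_pos (- kap * x)).
    assert (y x <= y x1 * exp (kap * (x - x1))).
    { apply (Rmult_le_reg_r (exp (- kap * x))); [exact H0|]. nra. }
    nra. }
  set (h := fun x => f x - y x1 * x).
  assert (Hh : forall x, x1 <= x -> is_derive h x (f' x - y x1)).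
  { intros x Hx. unfold h. apply is_derive_sub; [apply Hd1; lra|].
    auto_derive; [exact I|ring]. }
  assert (Hhn : forall x, x1 <= x -> f' x - y x1 <= 0).
  { intros x Hx. pose proof (Hyx x Hx). pose proof (Hpos x). unfold y in *. nra. }
  set (xb := x1 + f x1 / (- y x1) + 1).
  assert (Hxb : x1 <= xb).
  { unfold xb. assert (0 <= f x1 / - y x1) by (apply Rdiv_le_0_compat; [left; apply Hpos|lra]). lra. }
  pose proof (noninc_from h (fun x => f' x - y x1) x1 Hh Hhn x1 xb ltac:(lra) Hxb) as H.
  unfold h in H. pose proof (Hpos xb).
  assert (Hq : y x1 * (xb - x1) = - f x1 + y x1).
  { unfold xb. field. lra. }
  nra.
Qed.

Lemma buc_cont (f : R -> R) x : bdd_unif_cont f -> continuity_pt f x.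
Proof.
  intros [_ H] e He. destruct (H e He) as [d [Hd Hdd]].
  exists d. split; [exact Hd|]. intros y [_ Hy]. simpl in *. unfold R_dist in *.
  apply Hdd. exact Hy.
Qed.

Lemma tc_sub (A : R -> R -> R) (G H : R -> R) (D P : R -> Prop) (t K : R) :
  (forall e, 0 < e -> exists d, 0 < d /\ forall s, P s -> Rabs (s - t) < d ->
     forall y, D y -> Rabs (A y s - A y t) < e) ->
  continuity_pt G t -> (forall y, D y -> Rabs (H y) <= K) ->
  (forall e, 0 < e -> exists d, 0 < d /\ forall s, P s -> Rabs (s - t) < d ->
     forall y, D y -> Rabs ((A y s - G s * H y) - (A y t - G t * H y)) < e).
Proof.
  intros HA HG HH e He.
  destruct (HA (e/2) ltac:(lra)) as [d1 [Hd1 Hdd1]].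
  set (K' := Rabs K + 1).
  assert (HK' : 0 < K') by (unfold K'; pose proof (Rabs_pos K); lra).
  destruct (HG (e / 2 / K')) as [d2 [Hd2 Hdd2]].
  { apply Rdiv_lt_0_compat; lra. }
  exists (Rmin d1 d2). split; [apply Rmin_pos; lra|].
  intros s Ps Hs y Dy.
  pose proof (Rmin_l d1 d2). pose proof (Rmin_r d1 d2).
  assert (Ha : Rabs (A y s - A y t) < e / 2) by (apply Hdd1; auto; lra).
  assert (Hg : Rabs (G s - G t) < e / 2 / K').
  { destruct (Req_dec s t) as [->|Hne].
    - rewrite Rminus_diag, Rabs_R0. apply Rdiv_lt_0_compat; lra.
    - apply Hdd2. split; [split; [exact I| auto]|]. simpl. unfold R_dist. lra. }
  replace ((A y s - G s * H y) - (A y t - G t * H y)) with ((A y s - A y t) - (G s - G t) * H y) by ring.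
  eapply Rle_lt_trans; [apply Rabs_triang|]. rewrite Rabs_Ropp, Rabs_mult.
  assert (Rabs (H y) <= K') by (pose proof (HH y Dy); pose proof (Rle_abs K); unfold K'; lra).
  assert (Hp : Rabs (G s - G t) * Rabs (H y) <= e / 2 / K' * K').
  { apply Rmult_le_compat; try apply Rabs_pos; lra. }
  replace (e / 2 / K' * K') with (e / 2) in Hp by (field; lra).
  lra.
Qed.

Lemma pde_ineq chi a b lambda mu u0 u v x t C :
  classical_solution chi a b lambda mu u0 u v -> 0 < chi -> 0 < lambda -> 0 < t ->
  Rabs (d_x v x t) <= C ->
  d_t u x t <= d_xx u x t + chi * C * Rabs (d_x u x t) + u x t * (a - (b - chi * mu) * u x t).
Proof.
  intros CS Hchi Hl Ht HC.
  destruct CS as (Hi & Hnn & Hbu & Hv & Hc & Hc1 & Hpde).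
  destruct (Hpde x t Ht) as (e1 & e2 & e3 & e4 & e5 & eq1 & eq2).
  rewrite Derive_mult in eq1 by assumption.
  change (Derive (fun y => u y t) x) with (d_x u x t) in eq1.
  change (Derive (fun y => d_x v y t) x) with (d_xx v x t) in eq1.
  assert (Hvxx : d_xx v x t = lambda * v x t - mu * u x t) by lra.
  rewrite Hvxx in eq1.
  destruct (Hnn x t ltac:(lra)) as [Hu Hv0].
  assert (H1 : - (d_x u x t * d_x v x t) <= Rabs (d_x u x t) * C).
  { pose proof (Rle_abs (- (d_x u x t * d_x v x t))). rewrite Rabs_Ropp, Rabs_mult in H.
    pose proof (Rabs_pos (d_x u x t)).
    assert (Rabs (d_x u x t) * Rabs (d_x v x t) <= Rabs (d_x u x t) * C) by (apply Rmult_le_compat_l; lra).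
    lra. }
  assert (H2 : 0 <= u x t * v x t) by (apply Rmult_le_pos; lra).
  assert (H3 : chi * (- (d_x u x t * d_x v x t)) <= chi * (Rabs (d_x u x t) * C)) by (apply Rmult_le_compat_l; lra).
  assert (H4 : 0 <= chi * lambda * (u x t * v x t)) by (apply Rmult_le_pos; [nra|lra]).
  rewrite eq1. nra.
Qed.

Lemma exp_le_mono x y : x <= y -> exp x <= exp y.
Proof. intros [H|H]; [left; apply exp_increasing; exact H| subst; lra]. Qed.

Definition phi (y : R) := exp y + exp (- y).
Definition phi' (y : R) := exp y - exp (- y).

Lemma phi_der y : is_derive phi y (phi' y).
Proof. unfold phi, phi'. auto_derive; [exact I|ring]. Qed.
Lemma phi'_der y : is_derive phi' y (phi y).
Proof. unfold phi, phi'. auto_derive; [exact I|ring]. Qed.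
Lemma phi_pos y : 0 < phi y.
Proof. unfold phi. pose proof (exp_pos y). pose proof (exp_pos (-y)). lra. Qed.
Lemma phi'_le y : Rabs (phi' y) <= phi y.
Proof. unfold phi, phi'. pose proof (exp_pos y). pose proof (exp_pos (-y)). apply Rabs_le. lra. Qed.
Lemma phi_ge y : 1 + Rabs y <= phi y.
Proof. pose proof (cosh_ge 1 y ltac:(lra)). unfold phi. replace (1 * y) with y in H by ring. replace (1 * Rabs y) with (Rabs y) in H by ring.
  replace (exp (- (1) * y)) with (exp (-y)) in H by (f_equal; ring). exact H. Qed.
Lemma phi_le y R0 : -R0 <= y <= R0 -> Rabs (phi y) <= 2 * exp R0.
Proof. intros Hy. rewrite Rabs_right by (left; apply phi_pos). unfold phi.
  pose proof (exp_le_mono y R0 ltac:(lra)). pose proof (exp_le_mono (-y) R0 ltac:(lra)). lra. Qed.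

Lemma is_derive_Gc (dl be c t : R) : is_derive (fun s => dl * exp (be * s) * c) t (dl * (be * exp (be * t)) * c).
Proof. auto_derive; [exact I|ring]. Qed.

Lemma cont_G (dl be t : R) : continuity_pt (fun s => dl * exp (be * s)) t.
Proof. apply (deriv_cont _ _ (dl * (be * exp (be * t)))). auto_derive; [exact I|ring]. Qed.

Lemma vx_bound chi a b lambda mu u0 u v T BT :
  classical_solution chi a b lambda mu u0 u v -> 0 < lambda -> 0 < mu ->
  (forall t x, 0 <= t <= T -> Rabs (u x t) <= BT) ->
  forall t x, 0 < t <= T -> Rabs (d_x v x t) <= 2 * (mu * BT / lambda) + (lambda * (mu * BT / lambda) + mu * BT).
Proof.
  intros CS Hl Hm HB t x Ht.
  destruct CS as (Hi & Hnn & Hbu & Hv & Hc & Hc1 & Hpde).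
  assert (Hd1 : forall y, is_derive (fun y => v y t) y (d_x v y t)).
  { intro y. apply Derive_correct. apply (Hpde y t ltac:(lra)). }
  assert (Hd2 : forall y, is_derive (fun y => d_x v y t) y (d_xx v y t)).
  { intro y. apply Derive_correct. apply (Hpde y t ltac:(lra)). }
  assert (Heq : forall y, d_xx v y t = lambda * v y t - mu * u y t).
  { intro y. destruct (Hpde y t ltac:(lra)) as (_ & _ & _ & _ & _ & _ & e). lra. }
  destruct (Hv t ltac:(lra)) as [Vt HVt].
  assert (Hub : forall y, u y t <= BT).
  { intro y. pose proof (HB t y ltac:(lra)). pose proof (Rle_abs (u y t)). lra. }
  pose proof (elliptic_bound (fun y => v y t) (fun y => u y t) (fun y => d_x v y t) (fun y => d_xx v y t)
     lambda mu BT Vt Hl Hm HVt Hd1 Hd2 Heq Hub) as Hvb.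
  assert (HvB : forall y, Rabs (v y t) <= mu * BT / lambda).
  { intro y. pose proof (Hvb y). destruct (Hnn y t ltac:(lra)). rewrite Rabs_right; lra. }
  apply (landau (fun y => v y t) (fun y => d_x v y t) (fun y => d_xx v y t)); auto.
  intro y. rewrite Heq. 
  pose proof (HB t y ltac:(lra)) as Hu. pose proof (HvB y) as Hw.
  eapply Rle_trans; [apply Rabs_triang|]. rewrite Rabs_Ropp, !Rabs_mult.
  rewrite (Rabs_right lambda) by lra. rewrite (Rabs_right mu) by lra.
  apply Rplus_le_compat; apply Rmult_le_compat_l; lra.
Qed.

Lemma global_bound chi a b lambda mu u0 u v M :
  classical_solution chi a b lambda mu u0 u v -> 0 < chi -> 0 < a -> 0 < lambda -> 0 < mu ->
  chi * mu < b -> (forall x, u0 x <= M) -> a / (b - chi * mu) <= M ->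
  forall x t, 0 <= t -> u x t <= M.
Proof.
  intros CS Hchi Ha Hl Hm Hb Hu0 HM x0 t0 Ht0.
  apply Rnot_lt_le; intro Hbad.
  pose proof CS as CS'.
  destruct CS' as (Hi & Hnn & Hbu & Hv & Hc & Hc1 & Hpde).
  destruct (bound_on_interval u t0 Ht0 (fun t Ht => proj1 (Hbu t Ht)) Hc) as [BT HBT].
  assert (HBT0 : 0 <= BT) by (pose proof (HBT 0 0 ltac:(lra)); pose proof (Rabs_pos (u 0 0)); lra).
  set (C := 2 * (mu * BT / lambda) + (lambda * (mu * BT / lambda) + mu * BT)).
  assert (HC0 : 0 <= C).
  { unfold C. assert (0 <= mu * BT / lambda) by (apply Rdiv_le_0_compat; [apply Rmult_le_pos|]; lra).
    assert (0 <= lambda * (mu * BT / lambda)) by (apply Rmult_le_pos; lra).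
    assert (0 <= mu * BT) by (apply Rmult_le_pos; lra). lra. }
  pose proof (vx_bound chi a b lambda mu u0 u v t0 BT CS Hl Hm HBT) as Hvx. fold C in Hvx.
  set (be := 2 + chi * C).
  assert (Hbe : 0 < be) by (unfold be; nra).
  set (P0 := exp (be * t0) * phi x0).
  assert (HP0 : 0 < P0) by (unfold P0; apply Rmult_lt_0_compat; [apply exp_pos|apply phi_pos]).
  set (dl := (u x0 t0 - M) / (2 * P0)).
  assert (Hdl : 0 < dl) by (unfold dl; apply Rdiv_lt_0_compat; lra).
  set (Z := fun y s => (u y s - M) - (dl * exp (be * s)) * phi y).
  set (R0 := (BT + Rabs M) / dl + Rabs x0 + 1).
  assert (HR0x : Rabs x0 < R0).
  { unfold R0. assert (0 <= (BT + Rabs M) / dl) by (apply Rdiv_le_0_compat; [pose proof (Rabs_pos M)|]; lra). lra. }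
  assert (HR0 : 0 < R0) by (pose proof (Rabs_pos x0); lra).
  assert (Hfar : forall y t, 0 <= t <= t0 -> R0 <= Rabs y -> Z y t < 0).
  { intros y t Ht Hy. unfold Z.
    pose proof (HBT t y Ht). pose proof (Rle_abs (u y t)).
    pose proof (phi_ge y). pose proof (Rle_abs (-M)). rewrite Rabs_Ropp in H2.
    assert (H3 : 1 <= exp (be * t)) by (pose proof (exp_ineq1_le (be*t)); nra).
    assert (H4 : dl * phi y <= dl * exp (be * t) * phi y).
    { pose proof (phi_pos y). assert (0 < dl * phi y) by (apply Rmult_lt_0_compat; lra). nra. }
    assert (H5 : BT + Rabs M < dl * Rabs y).
    { assert ((BT + Rabs M) / dl < Rabs y) by (unfold R0 in Hy; pose proof (Rabs_pos x0); lra).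
      apply (Rmult_lt_compat_l dl) in H5; [|lra]. field_simplify in H5; lra. }
    assert (H6 : dl * (1 + Rabs y) <= dl * phi y) by (apply Rmult_le_compat_l; lra).
    lra. }
  assert (Hx0r : - R0 <= x0 <= R0) by (apply Rabs_def2 in HR0x; lra).
  assert (HZ : Z x0 t0 < 0).
  { apply (maxp Z t0 (- R0) R0); try lra.
    - intros t Ht x Hx. unfold Z. apply continuity_pt_minus; [apply continuity_pt_minus|].
      + apply buc_cont. apply Hbu. lra.
      + apply continuity_pt_const. intros p q; reflexivity.
      + apply continuity_pt_scal. apply (deriv_cont _ _ _ (phi_der x)).
    - intros t Ht. split; apply Hfar; auto; rewrite ?Rabs_Ropp, Rabs_right; lra.
    - intros x Hx. unfold Z. rewrite Hi. pose proof (Hu0 x).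
      pose proof (phi_pos x). pose proof (exp_pos (be * 0)).
      assert (0 < dl * exp (be * 0) * phi x) by (apply Rmult_lt_0_compat; [apply Rmult_lt_0_compat|]; lra). lra.
    - intros t Ht.
      assert (HA : forall e, 0 < e -> exists d, 0 < d /\ forall s, (fun s => 0 <= s <= t0) s -> Rabs (s - t) < d ->
                forall y, (fun y => - R0 <= y <= R0) y -> Rabs ((fun y s => u y s - M) y s - (fun y s => u y s - M) y t) < e).
      { intros e He. destruct (Hc t (proj1 Ht) e He) as [d [Hd Hdd]]. exists d. split; [exact Hd|].
        intros s Ps Hs y Dy. simpl. replace (u y s - M - (u y t - M)) with (u y s - u y t) by ring.
        apply Hdd; [apply Ps|exact Hs]. }
      pose proof (tc_sub (fun y s => u y s - M) (fun s => dl * exp (be * s)) phi (fun y => - R0 <= y <= R0)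
        (fun s => 0 <= s <= t0) t (2 * exp R0) HA (cont_G dl be t) (fun y Dy => phi_le y R0 Dy)) as HH.
      exact HH.
    - intros t1 x1 Ht1 Hx1 HZ1 Hmax.
      set (G := dl * exp (be * t1)).
      assert (HG : 0 < G) by (unfold G; apply Rmult_lt_0_compat; [lra|apply exp_pos]).
      set (r := Rmin (x1 + R0) (R0 - x1)).
      assert (Hr : 0 < r) by (unfold r; apply Rmin_pos; lra).
      destruct (locmax_2 (fun y => Z y t1) (fun y => d_x u y t1 - G * phi' y) x1 r
                 (d_xx u x1 t1 - G * phi x1) Hr) as [E1 E2].
      + intros y _. unfold Z. fold G. apply is_derive_sub; [|apply is_derive_scal; apply phi_der].
        replace (d_x u y t1) with (d_x u y t1 - 0) by ring.
        apply is_derive_sub; [|apply is_derive_cst].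
        apply Derive_correct. apply (Hpde y t1 ltac:(lra)).
      + apply is_derive_sub; [|apply is_derive_scal; apply phi'_der].
        apply Derive_correct. apply (Hpde x1 t1 ltac:(lra)).
      + intros y Hy. simpl. rewrite HZ1. apply Hmax.
        pose proof (Rmin_l (x1 + R0) (R0 - x1)). pose proof (Rmin_r (x1 + R0) (R0 - x1)).
        apply Rabs_def2 in Hy. unfold r in *. lra.
      + assert (Hdt : is_derive (fun s => Z x1 s) t1 (d_t u x1 t1 - dl * (be * exp (be * t1)) * phi x1)).
        { unfold Z. apply is_derive_sub; [|apply is_derive_Gc].
          replace (d_t u x1 t1) with (d_t u x1 t1 - 0) by ring.
          apply is_derive_sub; [|apply is_derive_cst].
          apply Derive_correct. apply (Hc1 t1 ltac:(lra)). }
        destruct (deriv_neg_before (fun s => Z x1 s) t1 _ ltac:(lra) Hdt) as [s [Hs Hzs]].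
        * pose proof (pde_ineq chi a b lambda mu u0 u v x1 t1 C CS Hchi Hl ltac:(lra) (Hvx t1 x1 Ht1)) as Hp.
          assert (Hu1 : u x1 t1 = M + G * phi x1) by (unfold Z in HZ1; fold G in HZ1; lra).
          assert (HMp : 0 <= a / (b - chi * mu)) by (apply Rdiv_le_0_compat; lra).
          assert (Hq1 : a <= (b - chi * mu) * u x1 t1).
          { assert (a = (b - chi*mu) * (a / (b - chi*mu))) by (field; lra).
            pose proof (phi_pos x1).
            assert (0 <= G * phi x1) by (apply Rmult_le_pos; lra).
            assert (0 <= (b - chi*mu) * (u x1 t1 - a / (b - chi*mu))) by (apply Rmult_le_pos; lra).
            lra. }
          assert (Hq2 : u x1 t1 * (a - (b - chi * mu) * u x1 t1) <= 0).
          { pose proof (phi_pos x1). apply Rmult_le_0_l; nra. }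
          assert (Hq3 : Rabs (d_x u x1 t1) <= G * phi x1).
          { replace (d_x u x1 t1) with (G * phi' x1) by lra. rewrite Rabs_mult, (Rabs_right G) by lra.
            apply Rmult_le_compat_l; [lra|apply phi'_le]. }
          assert (Hq4 : chi * C * Rabs (d_x u x1 t1) <= chi * C * (G * phi x1)).
          { apply Rmult_le_compat_l; [nra|exact Hq3]. }
          assert (HGp : 0 < G * phi x1) by (apply Rmult_lt_0_compat; [lra|apply phi_pos]).
          assert (Hexp : dl * (be * exp (be * t1)) * phi x1 = be * (G * phi x1)) by (unfold G; ring).
          rewrite Hexp. unfold be. nra.
        * exists s. split; [exact Hs|]. rewrite <- HZ1. exact Hzs. }
  unfold Z in HZ. fold P0 in HZ.
  assert (dl * exp (be * t0) * phi x0 = dl * P0) by (unfold P0; ring).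
  assert (dl * P0 = (u x0 t0 - M) / 2) by (unfold dl; field; lra).
  lra.
Qed.

Lemma exp_der y : is_derive exp y (exp y).
Proof. auto_derive; [exact I|ring]. Qed.

Lemma upper_comp chi a b lambda mu u0 u v M C X K k :
  classical_solution chi a b lambda mu u0 u v -> 0 < chi -> 0 < lambda -> chi * mu < b ->
  (forall x t, 0 <= t -> u x t <= M) ->
  (forall x t, 0 < t -> Rabs (d_x v x t) <= C) -> 0 <= C -> 0 <= k -> 0 <= a ->
  (forall x, X <= x -> ex_derive u0 x /\ ex_derive (Derive u0) x) ->
  (forall x, X <= x -> Derive (Derive u0) x + chi * C * Rabs (Derive u0 x) + a * u0 x <= k * u0 x) ->
  (forall x, 0 < u0 x) -> 1 <= K -> M <= K * u0 X -> bdd_unif_cont u0 ->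
  forall x t, X <= x -> 0 <= t -> u x t <= K * exp (k * t) * u0 x.
Proof.
  intros CS Hchi Hl Hb HM HC HC0 Hk Ha Hd Hsup Hpos HK HKX Hbu0 x0 t0 Hx0 Ht0.
  apply Rnot_lt_le; intro Hbad.
  pose proof CS as CS'.
  destruct CS' as (Hi & Hnn & Hbu & Hv & Hc & Hc1 & Hpde).
  set (be := 2 + chi * C + a).
  assert (Hbe : 0 < be) by (unfold be; nra).
  set (P0 := exp (be * t0) * exp x0).
  assert (HP0 : 0 < P0) by (unfold P0; apply Rmult_lt_0_compat; apply exp_pos).
  set (dl := (u x0 t0 - K * exp (k * t0) * u0 x0) / (2 * P0)).
  assert (Hdl : 0 < dl) by (unfold dl; apply Rdiv_lt_0_compat; lra).
  set (Z := fun y s => (u y s - (K * exp (k * s)) * u0 y) - (dl * exp (be * s)) * exp y).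
  set (R0 := Rabs M / dl + Rabs x0 + Rabs X + 1).
  assert (HR0x : x0 < R0).
  { unfold R0. assert (0 <= Rabs M / dl) by (apply Rdiv_le_0_compat; [pose proof (Rabs_pos M)|]; lra).
    pose proof (Rle_abs x0). pose proof (Rabs_pos X). lra. }
  assert (HXR : X < R0).
  { unfold R0. assert (0 <= Rabs M / dl) by (apply Rdiv_le_0_compat; [pose proof (Rabs_pos M)|]; lra).
    pose proof (Rle_abs X). pose proof (Rabs_pos x0). lra. }
  assert (HKe : forall s, 0 <= s -> 0 <= K * exp (k * s)).
  { intros s Hs. apply Rmult_le_pos; [lra|left; apply exp_pos]. }
  assert (Hdlpos : forall s y, 0 < dl * exp (be * s) * exp y).
  { intros s y. apply Rmult_lt_0_compat; [apply Rmult_lt_0_compat; [lra|apply exp_pos]|apply exp_pos]. }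
  assert (Hfar : forall t, 0 <= t <= t0 -> Z R0 t < 0).
  { intros t Ht. unfold Z.
    pose proof (HM R0 t ltac:(lra)).
    assert (0 <= K * exp (k * t) * u0 R0) by (apply Rmult_le_pos; [apply HKe; lra|left; apply Hpos]).
    assert (H3 : 1 <= exp (be * t)) by (pose proof (exp_ineq1_le (be*t)); nra).
    assert (H4 : dl * exp R0 <= dl * exp (be * t) * exp R0).
    { pose proof (exp_pos R0). assert (0 < dl * exp R0) by (apply Rmult_lt_0_compat; lra). nra. }
    assert (H5 : Rabs M < dl * R0).
    { assert (Hq : Rabs M / dl < R0) by (unfold R0; pose proof (Rabs_pos x0); pose proof (Rabs_pos X); lra).
      apply (Rmult_lt_compat_l dl) in Hq; [|lra]. field_simplify in Hq; lra. }
    pose proof (exp_ineq1_le R0). pose proof (Rle_abs M).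
    assert (H6 : dl * (1 + R0) <= dl * exp R0) by (apply Rmult_le_compat_l; lra).
    lra. }
  assert (HZ : Z x0 t0 < 0).
  { apply (maxp Z t0 X R0); try lra.
    - intros t Ht x Hx. unfold Z. apply continuity_pt_minus; [apply continuity_pt_minus|].
      + apply buc_cont. apply Hbu. lra.
      + apply continuity_pt_scal. apply buc_cont. exact Hbu0.
      + apply continuity_pt_scal. apply (deriv_cont _ _ _ (exp_der x)).
    - intros t Ht. split; [|apply Hfar; auto].
      unfold Z. pose proof (HM X t ltac:(lra)).
      assert (H1 : 1 <= exp (k * t)) by (pose proof (exp_ineq1_le (k*t)); nra).
      assert (K * u0 X <= K * exp (k * t) * u0 X).
      { pose proof (Hpos X). assert (0 < K * u0 X) by (apply Rmult_lt_0_compat; lra). nra. }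
      pose proof (Hdlpos t X). lra.
    - intros x Hx. unfold Z. rewrite Hi. 
      pose proof (Hpos x). pose proof (Hdlpos 0 x).
      replace (k * 0) with 0 by ring. rewrite exp_0.
      assert (u0 x <= K * 1 * u0 x) by nra. lra.
    - intros t Ht.
      assert (HA : forall e, 0 < e -> exists d, 0 < d /\ forall s, (fun s => 0 <= s <= t0) s -> Rabs (s - t) < d ->
                forall y, (fun y => X <= y <= R0) y -> Rabs (u y s - u y t) < e).
      { intros e He. destruct (Hc t (proj1 Ht) e He) as [d [Hd' Hdd]]. exists d. split; [exact Hd'|].
        intros s Ps Hs y Dy. apply Hdd; [apply Ps|exact Hs]. }
      destruct Hbu0 as [[B0 HB0] _].
      pose proof (tc_sub u (fun s => K * exp (k * s)) u0 (fun y => X <= y <= R0)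
        (fun s => 0 <= s <= t0) t B0 HA (cont_G K k t) (fun y Dy => HB0 y)) as HH1.
      assert (Hexb : forall y, X <= y <= R0 -> Rabs (exp y) <= exp R0).
      { intros y Hy. rewrite Rabs_right by (left; apply exp_pos). apply exp_le_mono; lra. }
      pose proof (tc_sub (fun y s => u y s - K * exp (k * s) * u0 y) (fun s => dl * exp (be * s)) exp
        (fun y => X <= y <= R0) (fun s => 0 <= s <= t0) t (exp R0) HH1 (cont_G dl be t) Hexb) as HH2.
      exact HH2.
    - intros t1 x1 Ht1 Hx1 HZ1 Hmax.
      set (U := K * exp (k * t1)).
      assert (HU : 0 <= U) by (apply HKe; lra).
      set (G := dl * exp (be * t1)).
      assert (HG : 0 < G) by (unfold G; apply Rmult_lt_0_compat; [lra|apply exp_pos]).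
      set (r := Rmin (x1 - X) (R0 - x1)).
      assert (Hr : 0 < r) by (unfold r; apply Rmin_pos; lra).
      pose proof (Rmin_l (x1 - X) (R0 - x1)). pose proof (Rmin_r (x1 - X) (R0 - x1)).
      destruct (locmax_2 (fun y => Z y t1) (fun y => (d_x u y t1 - U * Derive u0 y) - G * exp y) x1 r
                 ((d_xx u x1 t1 - U * Derive (Derive u0) x1) - G * exp x1) Hr) as [E1 E2].
      + intros y Hy. apply Rabs_def2 in Hy. unfold Z. fold U G.
        apply is_derive_sub; [|apply is_derive_scal; apply exp_der].
        apply is_derive_sub; [|apply is_derive_scal; apply Derive_correct; apply Hd; unfold r in *; lra].
        apply Derive_correct. apply (Hpde y t1 ltac:(lra)).
      + apply is_derive_sub; [|apply is_derive_scal; apply exp_der].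
        apply is_derive_sub; [|apply is_derive_scal; apply Derive_correct; apply Hd; lra].
        apply Derive_correct. apply (Hpde x1 t1 ltac:(lra)).
      + intros y Hy. simpl. rewrite HZ1. apply Hmax.
        apply Rabs_def2 in Hy. unfold r in *. lra.
      + assert (Hdt : is_derive (fun s => Z x1 s) t1
           ((d_t u x1 t1 - K * (k * exp (k * t1)) * u0 x1) - dl * (be * exp (be * t1)) * exp x1)).
        { unfold Z. apply is_derive_sub; [|apply is_derive_Gc].
          apply is_derive_sub; [|apply is_derive_Gc].
          apply Derive_correct. apply (Hc1 t1 ltac:(lra)). }
        destruct (deriv_neg_before (fun s => Z x1 s) t1 _ ltac:(lra) Hdt) as [s [Hs Hzs]].
        * pose proof (pde_ineq chi a b lambda mu u0 u v x1 t1 C CS Hchi Hl ltac:(lra) (HC x1 t1 ltac:(lra))) as Hp.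
          assert (Hu1 : u x1 t1 = U * u0 x1 + G * exp x1) by (unfold Z in HZ1; fold U G in HZ1; lra).
          destruct (Hnn x1 t1 ltac:(lra)) as [Hu0' _].
          assert (Hq2 : u x1 t1 * (a - (b - chi * mu) * u x1 t1) <= a * u x1 t1).
          { assert (0 <= (b - chi*mu) * (u x1 t1 * u x1 t1)) by (apply Rmult_le_pos; nra). nra. }
          assert (Hq3 : Rabs (d_x u x1 t1) <= U * Rabs (Derive u0 x1) + G * exp x1).
          { replace (d_x u x1 t1) with (U * Derive u0 x1 + G * exp x1) by lra.
            eapply Rle_trans; [apply Rabs_triang|]. rewrite !Rabs_mult, (Rabs_right U), (Rabs_right G) by lra.
            rewrite (Rabs_right (exp x1)) by (left; apply exp_pos). lra. }
          assert (Hq4 : chi * C * Rabs (d_x u x1 t1) <= chi * C * (U * Rabs (Derive u0 x1) + G * exp x1)).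
          { apply Rmult_le_compat_l; [nra|exact Hq3]. }
          pose proof (Hsup x1 ltac:(lra)) as Hs1.
          assert (Hs2 : U * (Derive (Derive u0) x1 + chi * C * Rabs (Derive u0 x1) + a * u0 x1) <= U * (k * u0 x1)).
          { apply Rmult_le_compat_l; lra. }
          assert (HGp : 0 < G * exp x1) by (apply Rmult_lt_0_compat; [lra|apply exp_pos]).
          assert (Hexp : dl * (be * exp (be * t1)) * exp x1 = be * (G * exp x1)) by (unfold G; ring).
          assert (Hexp2 : K * (k * exp (k * t1)) * u0 x1 = U * (k * u0 x1)) by (unfold U; ring).
          rewrite Hexp, Hexp2. unfold be. nra.
        * exists s. split; [exact Hs|]. rewrite <- HZ1. exact Hzs. }
  unfold Z in HZ.
  assert (dl * exp (be * t0) * exp x0 = dl * P0) by (unfold P0; ring).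
  assert (dl * P0 = (u x0 t0 - K * exp (k * t0) * u0 x0) / 2) by (unfold dl; field; lra).
  lra.
Qed.

Theorem lemma3p1 (chi a b lambda mu : R) (u0 : R -> R) (u v : R -> R -> R) :
  0 < chi -> 0 < a -> 0 < b -> 0 < lambda -> 0 < mu ->
  b > 2 * chi * mu ->
  bdd_unif_cont u0 ->
  (forall x, 0 < u0 x) ->
  (* liminf_{x -> -oo} u0(x) > 0 *)
  (exists delta M, 0 < delta /\ forall x, x <= M -> delta <= u0 x) ->
  is_lim u0 p_infty 0 ->
  (exists xi0,
     (forall x, xi0 <= x -> ex_derive u0 x /\ ex_derive (Derive u0) x
                           /\ continuous (Derive_n u0 2) x) /\
     (forall x, xi0 <= x -> Derive u0 x <= 0) /\
     is_lim (fun x => Derive_n u0 2 x / u0 x) p_infty 0) ->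
  classical_solution chi a b lambda mu u0 u v ->
  forall (eps gamma1 : R) (zeta : R -> R),
    0 < eps -> 0 < gamma1 ->
    (exists T0, forall t, T0 <= t ->
       u0 (zeta t) = gamma1 * exp (- (a + eps) * t)) ->
    forall omega, 0 < omega < a / b ->
      exists T1, 0 <= T1 /\
        forall t, T1 <= t -> forall x, level_set u omega t x -> x <= zeta t.
Proof.
  intros Hchi Ha Hb Hl Hm Hb2 Hbu0 Hpos [d0 [ML [Hd0 HML]]] _ [xi0 [Hreg [Hdec Hlim]]] CS
    eps gamma1 zeta Heps Hg [T0 HT0] omega [Hom _].
  assert (Hcm : chi * mu < b) by nra.
  pose proof CS as CS'. destruct CS' as (Hi & Hnn & Hbu & Hv & Hc & Hc1 & Hpde).
  destruct Hbu0 as [[M0 HM0] Huc0] eqn:Ebu0.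
  set (M := Rmax M0 (a / (b - chi * mu))).
  assert (Hu0M : forall x, u0 x <= M).
  { intro x. pose proof (HM0 x). pose proof (Rle_abs (u0 x)). pose proof (Rmax_l M0 (a / (b - chi*mu))). unfold M. lra. }
  pose proof (global_bound chi a b lambda mu u0 u v M CS Hchi Ha Hl Hm Hcm Hu0M (Rmax_r _ _)) as HuM.
  assert (HM0' : 0 <= M) by (pose proof (Hu0M 0); pose proof (Hpos 0); lra).
  set (C := 2 * (mu * M / lambda) + (lambda * (mu * M / lambda) + mu * M)).
  assert (HC0 : 0 <= C).
  { unfold C. assert (0 <= mu * M / lambda) by (apply Rdiv_le_0_compat; [apply Rmult_le_pos|]; lra).
    assert (0 <= lambda * (mu * M / lambda)) by (apply Rmult_le_pos; lra).
    assert (0 <= mu * M) by (apply Rmult_le_pos; lra). lra. }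
  assert (HC : forall x t, 0 < t -> Rabs (d_x v x t) <= C).
  { intros x t Ht. apply (vx_bound chi a b lambda mu u0 u v t M CS Hl Hm); [|lra].
    intros s y Hs. destruct (Hnn y s ltac:(lra)). rewrite Rabs_right by lra. apply HuM; lra. }
  set (kap := eps / 6 / (chi * C + 1)).
  assert (Hkap : 0 < kap) by (unfold kap; apply Rdiv_lt_0_compat; nra).
  assert (Hkap2 : chi * C * kap <= eps / 6).
  { unfold kap. assert (0 < chi * C + 1) by nra.
    apply (Rmult_le_reg_r (chi * C + 1)); [lra|]. field_simplify; [|lra]. nra. }
  set (sm := Rmin (kap * kap) (eps / 6)).
  assert (Hsm : 0 < sm) by (unfold sm; apply Rmin_pos; nra).
  apply is_lim_spec in Hlim. destruct (Hlim (mkposreal sm Hsm)) as [X1 HX1]. simpl in HX1.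
  set (X := Rmax xi0 X1 + 1).
  assert (HXxi : xi0 <= X) by (unfold X; pose proof (Rmax_l xi0 X1); lra).
  assert (HX2 : forall x, X <= x -> Derive (Derive u0) x <= sm * u0 x).
  { intros x Hx. assert (Hq : Rabs (Derive_n u0 2 x / u0 x - 0) < sm).
    { apply HX1. unfold X in Hx. pose proof (Rmax_r xi0 X1). lra. }
    change (Derive_n u0 2 x) with (Derive (Derive u0) x) in Hq.
    rewrite Rminus_0_r in Hq. apply Rabs_def2 in Hq. destruct Hq as [Hq _].
    pose proof (Hpos x).
    replace (Derive (Derive u0) x) with (Derive (Derive u0) x / u0 x * u0 x) by (field; lra).
    apply Rmult_le_compat_r; lra. }
  assert (Hd : forall x, X <= x -> ex_derive u0 x /\ ex_derive (Derive u0) x).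
  { intros x Hx. destruct (Hreg x ltac:(lra)) as [h1 [h2 _]]. auto. }
  assert (Hrs : forall x, X <= x -> - kap * u0 x <= Derive u0 x).
  { apply (ratio_small u0 (Derive u0) (Derive (Derive u0)) X kap Hkap).
    - intros x Hx. apply Derive_correct. apply Hd; lra.
    - intros x Hx. apply Derive_correct. apply Hd; lra.
    - intros x Hx. pose proof (HX2 x Hx). pose proof (Hpos x).
      assert (sm <= kap * kap) by apply Rmin_l. nra.
    - exact Hpos. }
  set (k := a + eps / 2).
  assert (Hsup : forall x, X <= x -> Derive (Derive u0) x + chi * C * Rabs (Derive u0 x) + a * u0 x <= k * u0 x).
  { intros x Hx. pose proof (HX2 x Hx). pose proof (Hrs x Hx). pose proof (Hdec x ltac:(lra)).
    pose proof (Hpos x). rewrite Rabs_left1 by lra.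
    assert (sm <= eps / 6) by apply Rmin_r.
    assert (chi * C * - Derive u0 x <= chi * C * (kap * u0 x)) by (apply Rmult_le_compat_l; nra).
    assert (chi * C * kap * u0 x <= eps / 6 * u0 x) by (apply Rmult_le_compat_r; lra).
    assert (sm * u0 x <= eps / 6 * u0 x) by (apply Rmult_le_compat_r; lra).
    assert (0 < eps * u0 x) by (apply Rmult_lt_0_compat; lra). unfold k. lra. }
  set (K := Rmax 1 (M / u0 X)).
  assert (HKX : M <= K * u0 X).
  { pose proof (Hpos X). pose proof (Rmax_r 1 (M / u0 X)).
    replace M with (M / u0 X * u0 X) at 1 by (field; lra).
    apply Rmult_le_compat_r; unfold K; lra. }
  assert (HK1 : 1 <= K) by apply Rmax_l.
  assert (Hupper : forall x t, X <= x -> 0 <= t -> u x t <= K * exp (k * t) * u0 x).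
  { apply (upper_comp chi a b lambda mu u0 u v M C X K k CS Hchi Hl Hcm); auto; unfold k; lra. }
  set (ML' := Rmin ML X).
  destruct (continuity_ab_min u0 ML' X) as [xm [Hxm Hxmr]].
  { unfold ML'. apply Rmin_r. }
  { intros c _. apply buc_cont. exact Hbu0. }
  set (mlow := Rmin d0 (u0 xm)).
  assert (Hmlow : 0 < mlow) by (unfold mlow; apply Rmin_pos; [lra|apply Hpos]).
  assert (Hleft : forall y, y <= X -> mlow <= u0 y).
  { intros y Hy. destruct (Rle_or_lt y ML) as [H1|H1].
    - pose proof (HML y H1). pose proof (Rmin_l d0 (u0 xm)). unfold mlow; lra.
    - pose proof (Hxm y). pose proof (Rmin_r d0 (u0 xm)). pose proof (Rmin_l ML X).
      assert (u0 xm <= u0 y) by (apply Hxm; unfold ML'; lra). unfold mlow; lra. }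
  set (T1 := Rmax (Rmax 0 T0) (Rmax (gamma1 / (mlow * (a + eps))) (2 * K * gamma1 / (omega * eps)))).
  exists T1. split; [unfold T1; eapply Rle_trans; [apply Rmax_l|]; apply Rmax_l|].
  intros t Ht x Hlev. unfold level_set in Hlev.
  pose proof (Rmax_l (Rmax 0 T0) (Rmax (gamma1 / (mlow * (a + eps))) (2 * K * gamma1 / (omega * eps)))) as Ha1.
  pose proof (Rmax_r (Rmax 0 T0) (Rmax (gamma1 / (mlow * (a + eps))) (2 * K * gamma1 / (omega * eps)))) as Ha2.
  pose proof (Rmax_l 0 T0). pose proof (Rmax_r 0 T0).
  pose proof (Rmax_l (gamma1 / (mlow * (a + eps))) (2 * K * gamma1 / (omega * eps))).
  pose proof (Rmax_r (gamma1 / (mlow * (a + eps))) (2 * K * gamma1 / (omega * eps))).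
  fold T1 in Ha1, Ha2.
  assert (Ht0 : 0 <= t) by lra.
  pose proof (HT0 t ltac:(lra)) as Hz.
  assert (Hexp1 : exp (- (a + eps) * t) = / exp ((a + eps) * t)).
  { rewrite <- exp_Ropp. f_equal. ring. }
  assert (Hzx : X <= zeta t).
  { apply Rnot_lt_le; intro Hlt. pose proof (Hleft (zeta t) ltac:(lra)) as Hq.
    rewrite Hz, Hexp1 in Hq.
    assert (Hq2 : gamma1 / (mlow * (a + eps)) <= t) by lra.
    assert (Hq3 : gamma1 <= mlow * (a + eps) * t).
    { apply (Rmult_le_compat_l (mlow * (a + eps))) in Hq2; [|nra].
      field_simplify in Hq2; [lra|nra]. }
    pose proof (exp_ineq1_le ((a + eps) * t)).
    pose proof (exp_pos ((a + eps) * t)).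
    assert (mlow * exp ((a + eps) * t) <= gamma1).
    { apply (Rmult_le_compat_r (exp ((a + eps) * t))) in Hq; [|lra].
      rewrite Rmult_assoc, Rinv_l in Hq; lra. }
    nra. }
  apply Rnot_lt_le; intro Hxz.
  assert (Hmono : u0 x <= u0 (zeta t)).
  { apply (noninc_from u0 (Derive u0) xi0); try lra.
    - intros y Hy. apply Derive_correct. apply Hreg; lra.
    - exact Hdec. }
  pose proof (Hupper x t ltac:(lra) Ht0) as Hup.
  rewrite Hlev in Hup.
  assert (HKe : 0 <= K * exp (k * t)) by (apply Rmult_le_pos; [lra|left; apply exp_pos]).
  assert (Hup2 : omega <= K * exp (k * t) * (gamma1 * exp (- (a + eps) * t))).
  { rewrite <- Hz. eapply Rle_trans; [exact Hup|]. apply Rmult_le_compat_l; auto. }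
  assert (Hcomb : K * exp (k * t) * (gamma1 * exp (- (a + eps) * t)) = K * gamma1 / exp (eps / 2 * t)).
  { assert (E1 : exp (k * t) * exp (- (a + eps) * t) = exp (- (eps / 2 * t))).
    { rewrite <- exp_plus. f_equal. unfold k. lra. }
    transitivity (K * gamma1 * (exp (k * t) * exp (- (a + eps) * t))); [ring|].
    rewrite E1, exp_Ropp. pose proof (exp_pos (eps / 2 * t)). field. lra. }
  rewrite Hcomb in Hup2.
  assert (Hq : 2 * K * gamma1 / (omega * eps) <= t) by lra.
  assert (Hq3 : K * gamma1 <= omega * (eps / 2 * t)).
  { apply (Rmult_le_compat_l (omega * eps / 2)) in Hq; [|nra].
    field_simplify in Hq; [lra|nra]. }
  pose proof (exp_ineq1_le (eps / 2 * t)).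
  pose proof (exp_pos (eps / 2 * t)).
  assert (Hf : omega * exp (eps / 2 * t) <= K * gamma1).
  { apply (Rmult_le_compat_r (exp (eps / 2 * t))) in Hup2; [|lra].
    field_simplify in Hup2; lra. }
  nra.
Qed.
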